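(* Let $\theta\in[0,\pi[$, let $A$ be a non-empty line segment of length $l(A)$, let $(h(n))_n$ be a sequence of positive reals, and let $f$ be a lower semi-continuous function from $[\theta-\pi/2,\theta+\pi/2]$ to $\mathbb{R}^+\cup\{+\infty\}$. Let $\mathcal{D}_n=[\theta-\arctan(2h(n)/(nl(A))),\theta+\arctan(2h(n)/(nl(A)))]$ and $\underline{\mathcal{D}}=\bigcup_{N\ge1}\bigcap_{n\ge N}\mathcal{D}_n$. Then $$\limsup_{n\to\infty}\inf_{\widetilde\theta\in\mathcal{D}_n}f(\widetilde\theta)\geq\inf_{\widetilde\theta\in \mathrm{cl}(\underline{\mathcal{D}})}f(\widetilde\theta),$$ where $\mathrm{cl}(\underline{\mathcal{D}})$ is the closure of $\underline{\mathcal{D}}$. *)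

(* Defs.v *)
From HB Require Import structures.
From mathcomp Require Import all_boot all_order all_algebra.
From mathcomp Require Import all_classical all_reals all_analysis.
Set Implicit Arguments. Unset Strict Implicit. Unset Printing Implicit Defensive.
Import Order.TTheory GRing.Theory Num.Theory.
Import numFieldNormedType.Exports.
Local Open Scope classical_set_scope.
Local Open Scope ring_scope.

(* Lower semicontinuity of f : R -> \bar R on a domain D, w.r.t. the subspace
   topology of D (f is only meaningful on D). *)
Definition lsc_on {R : realType} (D : set R) (f : R -> \bar R) :=
  forall x, D x -> forall a : R, (a%:E < f x)%E ->
    exists2 V, nbhs x V & forall y, V y -> D y -> (a%:E < f y)%E.

Definition Dn {R : realType} (theta l : R) (h : nat -> R) (n : nat) : set R :=
  `[theta - atan (2 * h n / (n%:R * l)), theta + atan (2 * h n / (n%:R * l))]%classic.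

Definition Dunder {R : realType} (theta l : R) (h : nat -> R) : set R :=
  \bigcup_(N in [set N : nat | (1 <= N)%N]) \bigcap_(n in [set n : nat | (N <= n)%N]) Dn theta l h n.

(* Main.v *)
Require Import Defs.
From HB Require Import structures.
From mathcomp Require Import all_boot all_order all_algebra.
From mathcomp Require Import all_classical all_reals all_analysis.
From mathcomp Require Import lra.
Import Order.TTheory GRing.Theory Num.Theory.
Import numFieldNormedType.Exports.
Local Open Scope classical_set_scope.
Local Open Scope ring_scope.

Theorem lemma4 (R : realType) (theta l : R) (h : nat -> R) (f : R -> \bar R) :
  0 <= theta < pi ->
  0 < l ->
  (forall n, 0 < h n) ->
  (forall x, `[theta - pi / 2, theta + pi / 2]%classic x -> (0 <= f x)%E) ->
  lsc_on `[theta - pi / 2, theta + pi / 2]%classic f ->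
  (limn_esup (fun n => ereal_inf (f @` Dn theta l h n))
     >= ereal_inf (f @` closure (Dunder theta l h)))%E.
Proof.
move=> _ _ _ _ hlsc.
set g := (fun n => ereal_inf (f @` Dn theta l h n)).
set c := ereal_inf (f @` closure (Dunder theta l h)).
set a := (fun n : nat => atan (2 * h n / (n%:R * l))).
have pi2 : 0 < pi / 2 :> R by rewrite divr_gt0 // pi_gt0.
have aub n : a n < pi / 2 by exact: atan_ltpi2.
have key : forall b : R, (b%:E < c)%E -> forall N, exists2 n, (N <= n)%N & (b%:E <= g n)%E.
  move=> b bc N; apply: contrapT => nH.
  have H n : (N <= n)%N -> (g n < b%:E)%E.
    by move=> Nn; rewrite ltNge; apply/negP => bg; apply: nH; exists n.
  set S := [set r : R | r <= pi / 2 /\ forall y, `|y - theta| <= r ->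
     `[theta - pi / 2, theta + pi / 2]%classic y -> (b%:E < f y)%E].
  have hA n r : (N <= n)%N -> S r -> r < a n.
    move=> Nn [_ Sr]; rewrite ltNge; apply/negP => anr.
    have := H n Nn; rewrite ltNge => /negP; apply.
    apply/ereal_infP => _ [y Dy <-]; apply/ltW/Sr.
      move: Dy; rewrite /Dn /= in_itv /= => /andP[y1 y2].
      rewrite -/(a n) in y1 y2.
      rewrite (le_trans _ anr) // ler_norml; apply/andP; split; lra.
    move: Dy; rewrite /Dn /= !in_itv /= => /andP[y1 y2].
    rewrite -/(a n) in y1 y2.
    have := aub n; move=> an; apply/andP; split; lra.
  have S0 : S (-1).
    split; first lra.
    by move=> y yn; exfalso; have := normr_ge0 (y - theta); lra.
  have Sne : S !=set0 by exists (-1).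
  have Sub : ubound S (pi / 2) by move=> r [].
  have Shs : has_sup S by split => //; exists (pi / 2).
  set rs := sup S.
  have rsub : rs <= pi / 2 by exact: ge_sup.
  have rsge r : S r -> r <= rs by move=> Sr; exact: sup_upper_bound.
  have hge n : (N <= n)%N -> rs <= a n.
    by move=> Nn; apply: ge_sup => // r Sr; apply/ltW/hA.
  have [rsneg|rspos] := ltP rs 0.
    have : S (rs / 2).
      split; first lra.
      by move=> y yn; exfalso; have := normr_ge0 (y - theta); lra.
    move=> /rsge; lra.
  have rsS : S rs.
    split => // y yn Dy.
    have yD : Dunder theta l h y.
      exists N.+1 => //= n Nn.
      rewrite /Dn /= in_itv /=.
      have := hge n (ltnW Nn); rewrite -/(a n) => hn.
      move: yn; rewrite ler_norml => /andP[y1 y2].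
      apply/andP; split; lra.
    apply: (lt_le_trans bc); apply: ereal_inf_lbound.
    by exists y => //; exact: subset_closure.
  have rslt : rs < pi / 2.
    by have := hA N rs (leqnn N) rsS; have := aub N; lra.
  have [_ rsS'] := rsS.
  have Dp : `[theta - pi / 2, theta + pi / 2]%classic (theta + rs).
    rewrite /= in_itv /=; apply/andP; split; lra.
  have Dm : `[theta - pi / 2, theta + pi / 2]%classic (theta - rs).
    rewrite /= in_itv /=; apply/andP; split; lra.
  have fp : (b%:E < f (theta + rs)%R)%E.
    by apply: rsS' => //; rewrite addrAC subrr add0r ger0_norm.
  have fm : (b%:E < f (theta - rs)%R)%E.
    by apply: rsS' => //; rewrite addrAC subrr add0r normrN ger0_norm.
  have [Vp /nbhs_ballP [dp dp0 hdp] hVp] := hlsc _ Dp _ fp.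
  have [Vm /nbhs_ballP [dm dm0 hdm] hVm] := hlsc _ Dm _ fm.
  rewrite /= in dp0 dm0.
  set m := Num.min (Num.min dp dm) (pi / 2 - rs).
  have m1 : m <= dp by rewrite /m !ge_min lexx.
  have m2 : m <= dm by rewrite /m !ge_min lexx orbT.
  have m3 : m <= pi / 2 - rs by rewrite /m !ge_min lexx orbT.
  have m0 : 0 < m by rewrite /m !lt_min dp0 dm0 subr_gt0 rslt.
  have : S (rs + m / 2).
    split; first lra.
    move=> y yn Dy.
    have [yl|yg] := leP `|y - theta| rs; first exact: rsS'.
    have [y0|y0] := leP 0 (y - theta).
      rewrite ger0_norm // in yn yg.
      apply: hVp => //; apply: hdp; rewrite /ball /=.
      rewrite ltr_norml; apply/andP; split; lra.
    rewrite ltr0_norm // in yn yg.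
    apply: hVm => //; apply: hdm; rewrite /ball /=.
    rewrite ltr_norml; apply/andP; split; lra.
  move=> /rsge; lra.
have lb : forall b : R, (b%:E < c)%E -> (b%:E <= limn_esup g)%E.
  move=> b bc.
  rewrite limn_esup_lim (cvg_lim _ (@cvg_esups_inf R g)) //.
  apply/ereal_infP => _ [N _ <-].
  have [n Nn bn] := key b bc N.
  apply: (le_trans bn); apply: ereal_sup_ubound; by exists n.
clear key; move: lb; rewrite -/c; clearbody c.
case: c => [r| |] lb //; last by rewrite leNye.
- case E: (limn_esup g) => [s| |].
  + rewrite lee_fin leNgt; apply/negP => sr.
    by have := lb ((s + r) / 2)%R; rewrite E !lte_fin !lee_fin => /(_ ltac:(lra)); lra.
  + by rewrite leey.
  + by have := lb (r - 1)%R; rewrite E lte_fin leNgt ltNye /= => /(_ ltac:(lra)).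
- case E: (limn_esup g) => [s| |] //.
    by have := lb (s + 1)%R; rewrite E ltry lee_fin => /(_ isT) ?; exfalso; lra.
  by have := lb 0%R; rewrite E ltry leNgt ltNye => /(_ isT).
Qed.
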